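(* Let $f(n)=\sum_{k=0}^n(-1)^k\binom nk C_k\binom{2n-2k}{n-k}$ for integers $n\ge 0$. Then for all integers $n\ge 2$, $$-16(2n+1)(n-1)^2f(n-2)-4(2n^2-1)f(n-1)+(2n-1)(n+1)^2f(n)=0.$$
   Context: $C_k=\binom{2k}{k}\frac{1}{k+1}$ denotes the $k$-th Catalan number. *)

(* Defs.v *)
From mathcomp Require Import all_boot all_order all_algebra.
Set Implicit Arguments. Unset Strict Implicit. Unset Printing Implicit Defensive.
Import GRing.Theory Num.Theory.
Local Open Scope ring_scope.

(* k-th Catalan number C_k = binom(2k,k)/(k+1) (exact division in nat). *)
Definition catalan (k : nat) : nat := ('C(2 * k, k) %/ k.+1)%N.

Definition f (n : nat) : int :=
  \sum_(0 <= k < n.+1)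
    (-1) ^+ k * ('C(n, k) * catalan k * 'C(2 * n - 2 * k, n - k))%N%:Z.

(* Main.v *)
Require Import Defs.
From mathcomp Require Import all_boot all_order all_algebra.
From mathcomp Require Import ring lra zify.
Import GRing.Theory Num.Theory.
Local Open Scope ring_scope.

Lemma catalanE k : (catalan k * (k.+1)`! * k`! = (2 * k)`!)%N.
Proof.
have h1 := mul_bin_left (2 * k) k.
have e : (2 * k - k = k)%N by lia.
rewrite e in h1.
have hd : ('C(2 * k, k) = k.+1 * ('C(2 * k, k) - 'C(2 * k, k.+1)))%N.
  rewrite mulnBr h1 -mulnBl. by rewrite subSnn mul1n.
have hb := bin_fact (leq_addl k k).
have e2 : (k + k = 2 * k)%N by lia.
rewrite e2 e in hb.
rewrite /catalan {1}hd mulKn // factS -hb.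
rewrite {2}hd. ring.
Qed.

Definition tt (n k : nat) : int :=
  (-1) ^+ k * ('C(n, k) * catalan k * 'C(2 * n - 2 * k, n - k))%N%:Z.
Definition tq (n k : nat) : rat := (tt n k)%:~R.

Definition T (a b : nat) : rat :=
  (-1) ^+ a * ((a + b)`!%:R * (2 * a)`!%:R * (2 * b)`!%:R) /
  (a`!%:R ^+ 2 * (a.+1)`!%:R * b`!%:R ^+ 3).

Lemma factr_neq0 m : (m`!%:R : rat) != 0.
Proof. by rewrite pnatr_eq0 -lt0n fact_gt0. Qed.

Lemma tqT a b : tq (a + b) a = T a b.
Proof.
rewrite /tq /tt /T.
have e1 : (a + b - a = b)%N by lia.
have e2 : (2 * (a + b) - 2 * a = 2 * b)%N by lia.
rewrite e1 e2 rmorphM /= rmorphXn /= rmorphN /= rmorph1 -pmulrn.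
have hb1 := bin_fact (leq_addr b a). rewrite e1 in hb1.
have hb2 := bin_fact (leq_addl b b).
have e3 : (b + b - b = b)%N by lia.
have e4 : (b + b = 2 * b)%N by lia.
rewrite e3 e4 in hb2.
have hc := catalanE a.
rewrite [in LHS]natrM [in LHS]natrM.
have c1 : ('C(a + b, a)%:R : rat) = (a + b)`!%:R / (a`!%:R * b`!%:R).
  by rewrite -hb1 natrM natrM mulfK // mulf_neq0 // factr_neq0.
have c3 : ('C(2 * b, b)%:R : rat) = (2 * b)`!%:R / (b`!%:R * b`!%:R).
  by rewrite -hb2 natrM natrM mulfK // mulf_neq0 // factr_neq0.
have c2 : ((catalan a)%:R : rat) = (2 * a)`!%:R / ((a.+1)`!%:R * a`!%:R).
  by rewrite -hc -mulnA natrM natrM mulfK // mulf_neq0 // factr_neq0.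
rewrite c1 c2 c3.
field. by rewrite !factr_neq0.
Qed.

Ltac nz := repeat (apply/andP; split); try exact: factr_neq0;
  try (apply: lt0r_neq0; lra).

Lemma TA a b : 2 * (a%:R + b%:R + 1) * (2 * b%:R + 1) * T a b
   = (b%:R + 1) ^+ 2 * T a b.+1.
Proof.
have ha := ler0n rat a. have hb := ler0n rat b.
rewrite /T addnS.
have -> : (2 * b.+1 = (2 * b).+2)%N by lia.
rewrite !factS !natrM !mulrS ?natrD ?natrM.
field. nz.
Qed.

Lemma TB a b : (a%:R + 1) * (a%:R + 2) * (2 * b%:R + 1) * T a.+1 b
   = - (2 * a%:R + 1) * (b%:R + 1) ^+ 2 * T a b.+1.
Proof.
have ha := ler0n rat a. have hb := ler0n rat b.
rewrite /T addnS addSn.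
have -> : (2 * b.+1 = (2 * b).+2)%N by lia.
have -> : (2 * a.+1 = (2 * a).+2)%N by lia.
rewrite !factS !natrM !mulrS ?natrD ?natrM exprS.
field. nz.
Qed.

Lemma tq0 n k : (n < k)%N -> tq n k = 0.
Proof. by move=> h; rewrite /tq /tt bin_small // !mul0n mulr0. Qed.

Lemma tqA n k : 2 * (n%:R + 1) * (2 * (n%:R - k%:R) + 1) * tq n k
   = (n%:R - k%:R + 1) ^+ 2 * tq n.+1 k.
Proof.
case: (leqP k n) => hk.
  have [b ->] : exists b, n = (k + b)%N by exists (n - k)%N; lia.
  rewrite tqT -addnS tqT natrD.
  apply: (eq_trans _ (eq_trans (TA k b) _)); ring.
case: (eqVneq k n.+1) => [->|hk2].
  by rewrite tq0 // mulrS; ring.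
by rewrite !tq0 ?mulr0 //; lia.
Qed.

Lemma tqB n k : (k%:R + 1) * (k%:R + 2) * (2 * (n%:R - k%:R) - 1) * tq n k.+1
   = - (2 * k%:R + 1) * (n%:R - k%:R) ^+ 2 * tq n k.
Proof.
case: (ltnP k n) => hk.
  have [b ->] : exists b, n = (k + b.+1)%N by exists (n - k.+1)%N; lia.
  rewrite tqT -addSnnS tqT !natrD mulrS.
  apply: (eq_trans _ (eq_trans (TB k b) _)); ring.
case: (eqVneq k n) => [->|hk2].
  by rewrite tq0 // subrr; ring.
by rewrite !tq0 ?mulr0 //; lia.
Qed.

Lemma oddnz (m j : nat) : (2 * m%:R + 1 - 2 * j%:R : rat) != 0.
Proof.
rewrite subr_eq0.
have -> : (2 * m%:R + 1 : rat) = (2 * m + 1)%N%:R by rewrite natrD natrM.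
have -> : (2 * j%:R : rat) = (2 * j)%N%:R by rewrite natrM.
rewrite eqr_nat; apply/eqP; lia.
Qed.

Lemma tqA' n k : tq n k =
  (n%:R - k%:R + 1) ^+ 2 * tq n.+1 k / (2 * (n%:R + 1) * (2 * (n%:R - k%:R) + 1)).
Proof.
have hn := ler0n rat n.
have o : (2 * (n%:R - k%:R) + 1 : rat) != 0.
  apply: contra (oddnz n k) => /eqP e; apply/eqP; lra.
apply: (mulfI (x := 2 * (n%:R + 1) * (2 * (n%:R - k%:R) + 1))).
  rewrite !mulf_neq0 //; apply: lt0r_neq0; lra.
rewrite tqA. field. rewrite o /=. apply: lt0r_neq0; lra.
Qed.

Lemma tqB' n k : tq n k.+1 =
  - (2 * k%:R + 1) * (n%:R - k%:R) ^+ 2 * tq n k / ((k%:R + 1) * (k%:R + 2) * (2 * (n%:R - k%:R) - 1)).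
Proof.
have hk := ler0n rat k.
have o : (2 * (n%:R - k%:R) - 1 : rat) != 0.
  apply: contra (oddnz k n) => /eqP e; apply/eqP; lra.
apply: (mulfI (x := (k%:R + 1) * (k%:R + 2) * (2 * (n%:R - k%:R) - 1))).
  rewrite !mulf_neq0 //; apply: lt0r_neq0; lra.
rewrite tqB. field. rewrite o /=. apply/andP; split; apply: lt0r_neq0; lra.
Qed.

Definition Q (n k : nat) : rat :=
  let x := (n%:R : rat) in let y := (k%:R : rat) in
  y * (-2 * x + 5 * x ^+ 2 + 6 * x ^+ 3 - 8 * x ^+ 4)
  + y ^+ 2 * (1 - 8 * x - x ^+ 2 + 18 * x ^+ 3 - 8 * x ^+ 4)
  + y ^+ 3 * (3 - 4 * x - 10 * x ^+ 2 + 12 * x ^+ 3)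
  + y ^+ 4 * (2 + 2 * x - 4 * x ^+ 2).

Definition G (n k : nat) : rat :=
  tq n k * Q n k / (n%:R ^+ 2 * (2 * (n%:R - k%:R) - 1)).

Definition Lq (N k : nat) : rat :=
  let x := (N.+2%:R : rat) in
  - 16 * (2 * x + 1) * (x - 1) ^+ 2 * tq N k
  - 4 * (2 * x ^+ 2 - 1) * tq N.+1 k
  + (2 * x - 1) * (x + 1) ^+ 2 * tq N.+2 k.

Lemma perk N k : Lq N k = G N.+2 k.+1 - G N.+2 k.
Proof.
have hN := ler0n rat N. have hk := ler0n rat k.
have o1 := oddnz N.+1 k. have o2 := oddnz N k.
rewrite /Lq /G /Q (tqB' N.+2 k) (tqA' N k) (tqA' N.+1 k) !mulrS.
rewrite mulrS in o1.
field.
repeat (apply/andP; split);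
  first [ apply: lt0r_neq0; lra
        | apply: contra o1 => /eqP e; apply/eqP; lra
        | apply: contra o2 => /eqP e; apply/eqP; lra ].
Qed.

Lemma fq m : ((f m)%:~R : rat) = \sum_(0 <= k < m.+1) tq m k.
Proof. by rewrite /f rmorph_sum. Qed.

Lemma fext m p : (m < p)%N -> \sum_(0 <= k < m.+1) tq m k = \sum_(0 <= k < p) tq m k.
Proof.
move=> h; rewrite (@big_cat_nat _ _ _ m.+1 0 p) //=.
rewrite [X in _ = _ + X]big1_seq ?addr0 // => k /andP [_]; rewrite mem_iota => /andP [h1 _].
by rewrite tq0.
Qed.

Lemma sumL N : \sum_(0 <= k < N.+3) Lq N k = 0.
Proof.
rewrite (telescope_sumr_eq (G N.+2)) //; last by move=> k _; exact: perk.
rewrite /G tq0 // /Q !(mul0r, expr0n, mulr0, add0r, addr0, subrr) //=.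
Qed.

Theorem mainTheorem2 (n : nat) (hn : (2 <= n)%N) :
  - 16 * (2 * n%:Z + 1) * (n%:Z - 1) ^+ 2 * f (n - 2)
  - 4 * (2 * n%:Z ^+ 2 - 1) * f (n - 1)
  + (2 * n%:Z - 1) * (n%:Z + 1) ^+ 2 * f n = 0.
Proof.
apply/eqP; rewrite -(intr_eq0 rat) !rmorphD !rmorphN !rmorphM /=.
rewrite !(rmorphD, rmorphB, rmorphM, rmorphXn, rmorphN, rmorph1) /= -pmulrn.
case: n hn => [|[|N]] // _.
have -> : (N.+2 - 2 = N)%N by lia.
have -> : (N.+2 - 1 = N.+1)%N by lia.
rewrite !fq (@fext N N.+3); last lia.
rewrite (@fext N.+1 N.+3); last lia.
have := sumL N; rewrite /Lq !big_split /= sumrN -!mulr_sumr => h.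
rewrite -[X in _ == X]h.
apply/eqP; ring.
Qed.
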